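(* Let $G$ be a finite simple forest with $\operatorname{mat}(G)\geq 2$, let $x$ be a distant leaf of $G$ with neighbor $y$. Then for any $2\leq k\leq\operatorname{mat}(G)$, \[\operatorname{aim}(G-\{x,y\},k-1)+1\leq\operatorname{aim}(G,k).\]
   Context: A leaf is a vertex of degree $1$; a leaf $x$ with unique neighbor $y$ is a distant leaf if $y$ has at most one neighbor of degree greater than $1$. $G-U$ is the induced subgraph on $V(G)\setminus U$. $\operatorname{mat}$ is the matching number. Two edges form a gap if they are disjoint and no edge of the graph joins a vertex of one to a vertex of the other. A sequence $(a_1,\dots,a_n)$ of integers is $k$-admissable if $a_i\ge1$ and $\sum a_i\le n+k-1$. For a graph $H$ and $1\le k\le\operatorname{mat}(H)$, a matching $M$ of $H$ is $k$-admissable if there are nonempty pairwise disjoint $M_1,\dots,M_r\subseteq M$ with union $M$ such that edges from different $M_i$'s always form a gap in $H$, $(|M_1|,\dots,|M_r|)$ is $k$-admissable, and the induced subgraph of $H$ on $\bigcup_{e\in M_i}e$ is a forest for each $i$. $\operatorname{aim}(H,k)$ is the maximum size of a $k$-admissable matching of $H$ ($0$ if none). *)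

(* Defs.v *)
From Stdlib Require Import ClassicalEpsilon.
From mathcomp Require Import all_boot.
Set Implicit Arguments. Unset Strict Implicit. Unset Printing Implicit Defensive.

(* A finite simple graph: vertex set V : {set T} inside a finType T,
   adjacency adj : rel T assumed symmetric and irreflexive (only its
   restriction to V matters).  Induced subgraphs G - U are (V :\: U, adj). *)
Section Graphs.
Variable T : finType.
Implicit Types (V W : {set T}) (adj : rel T).

Definition simple_rel adj := symmetric adj /\ irreflexive adj.

Definition is_edge V adj (f : {set T}) : bool :=
  [exists x in V, exists y in V, adj x y && (f == [set x; y])].

Definition is_matching V adj (M : {set {set T}}) : bool :=
  [forall f in M, is_edge V adj f] &&
  [forall f in M, forall g in M, (f != g) ==> [disjoint f & g]].

Definition mat V adj : nat :=
  \max_(M : {set {set T}} | is_matching V adj M) #|M|.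

Definition degree V adj (v : T) : nat := #|[set u in V | adj v u]|.

Definition has_cycle W adj : Prop :=
  exists s : seq T, [/\ 3 <= size s, uniq s, all (mem W) s & cycle adj s].

Definition forest W adj : Prop := ~ has_cycle W adj.

Definition gap adj (f g : {set T}) : bool :=
  [disjoint f & g] && [forall u in f, forall v in g, ~~ adj u v].

Definition admissable_seq (k : nat) (a : seq nat) : bool :=
  all (fun ai => 0 < ai) a && (sumn a <= size a + k - 1).

(* k-admissable matching: M is partitioned (finset [partition]: blocks
   nonempty, pairwise disjoint, union M) into blocks M_1..M_r such that
   edges from different blocks form a gap, the size sequence is
   k-admissable, and each block spans an induced forest. *)
Definition admissable_matching V adj (k : nat) (M : {set {set T}}) : Prop :=
  is_matching V adj M /\
  exists P : {set {set {set T}}},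
    [/\ partition P M,
        (forall Mi Mj, Mi \in P -> Mj \in P -> Mi != Mj ->
           forall f g, f \in Mi -> g \in Mj -> gap adj f g),
        admissable_seq k [seq #|(Mi : {set {set T}})| | Mi <- enum P]
      & (forall Mi, Mi \in P -> forest (cover Mi) adj)].

Definition aim V adj (k : nat) : nat :=
  \max_(M : {set {set T}} | (if excluded_middle_informative (admissable_matching V adj k M)
                 then true else false)) #|M|.

Definition distant_leaf V adj (x y : T) : Prop :=
  [/\ x \in V, y \in V, [set u in V | adj x u] = [set y]
    & #|[set u in V | adj y u & 1 < degree V adj u]| <= 1].

End Graphs.

(* Main.v *)
Require Import Defs.
From mathcomp Require Import all_boot.
From mathcomp Require Import zify.
From Stdlib Require Import ClassicalEpsilon.
Set Implicit Arguments. Unset Strict Implicit. Unset Printing Implicit Defensive.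

Section H.
Variable T : finType.
Implicit Types (V W A B : {set T}) (adj : rel T).

Lemma disjP' A B : (forall u, u \in A -> u \in B -> False) -> [disjoint A & B].
Proof.
move=> H; rewrite disjoint_subset; apply/subsetP => u uA; rewrite inE.
by apply/negP => /(H u uA).
Qed.

Lemma edge_sub W adj f : is_edge W adj f -> f \subset W.
Proof.
case/exists_inP => a aW /exists_inP [b bW /andP [_ /eqP ->]].
by apply/subsetP => u; rewrite !inE => /orP [] /eqP ->.
Qed.

Lemma edge_mono W V adj f : W \subset V -> is_edge W adj f -> is_edge V adj f.
Proof.
move=> /subsetP sWV.
case/exists_inP => a aW /exists_inP [b bW /andP [ab fe]].
by apply/exists_inP; exists a; [exact: sWV|]; apply/exists_inP; exists b; [exact: sWV|]; rewrite ab.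
Qed.

Lemma edge_other W adj f v : simple_rel adj -> is_edge W adj f -> v \in f ->
  v \in W /\ exists2 w, w \in W & adj v w.
Proof.
move=> [sym _]; case/exists_inP => a aW /exists_inP [b bW /andP [ab /eqP ->]].
rewrite !inE => /orP [] /eqP ->; split => //.
  by exists b.
by exists a => //; rewrite sym.
Qed.

Lemma forest_sub W V adj : W \subset V -> forest V adj -> forest W adj.
Proof.
move=> /subsetP sWV fV [s [h1 h2 h3 h4]]; apply: fV; exists s; split => //.
by apply: sub_all h3 => u; apply: sWV.
Qed.

Lemma gap_sym adj f g : simple_rel adj -> gap adj f g -> gap adj g f.
Proof.
move=> [sym _] /andP [d /forall_inP H]; apply/andP; split; first by rewrite disjoint_sym.
apply/forall_inP => u ug; apply/forall_inP => v vf; rewrite sym.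
by move: (H v vf) => /forall_inP; apply.
Qed.

Lemma adm_seqE k (P : {set {set {set T}}}) M : partition P M ->
  admissable_seq k [seq #|(Mi : {set {set T}})| | Mi <- enum P] = (#|M| <= #|P| + k - 1).
Proof.
move=> pP; rewrite /admissable_seq size_map -cardE.
have -> : all (fun ai => 0 < ai) [seq #|(Mi : {set {set T}})| | Mi <- enum P].
  apply/allP => n /mapP [B]; rewrite mem_enum => BP ->.
  rewrite card_gt0; apply/negP => /eqP B0.
  by move: pP => /and3P [_ _]; rewrite -B0 BP.
rewrite (card_partition pP) sumnE big_map big_enum /=.
done.
Qed.

Lemma aim_ge V adj k M : admissable_matching V adj k M -> #|M| <= aim V adj k.
Proof.
move=> H; rewrite /aim.
apply: (@leq_bigmax_cond _ (fun M => if excluded_middle_informative (admissable_matching V adj k M) then true else false) (fun M : {set {set T}} => #|M|) M).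
by case: excluded_middle_informative.
Qed.

Lemma aim_le V adj k n : (forall M, admissable_matching V adj k M -> #|M| <= n) ->
  aim V adj k <= n.
Proof.
move=> H; rewrite /aim; apply/bigmax_leqP => M.
by case: excluded_middle_informative => // h _; apply: H.
Qed.

End H.

Lemma part_add (U : finType) (P : {set {set U}}) (D : {set U}) a B0 :
  partition P D -> a \notin D -> (B0 \in P \/ B0 = set0) ->
  partition ((a |: B0) |: (P :\ B0)) (a |: D).
Proof.
move=> /and3P [/eqP cP /trivIsetP tP nP] aD hB.
have sub : forall B, B \in P -> B \subset D by move=> B BP; rewrite -cP; apply: bigcup_sup.
apply/and3P; split.
- apply/eqP/setP => u; apply/bigcupP/idP.
  + case=> B /setU1P [-> | /setD1P [_ BP]].
      move=> /setU1P [->|uB0]; first by rewrite in_setU1 eqxx.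
      case: hB => [B0P|B00]; last by rewrite B00 inE in uB0.
      by rewrite in_setU1 (subsetP (sub _ B0P)) // orbT.
    by move=> uB; rewrite in_setU1 (subsetP (sub _ BP)) // orbT.
  + move=> /setU1P [-> | ].
      by exists (a |: B0); rewrite in_setU1 eqxx.
    rewrite -cP => /bigcupP [B BP uB]; case: (B =P B0) => [e|ne].
      by exists (a |: B0); rewrite in_setU1 ?eqxx // -e uB orbT.
    by exists B => //; rewrite in_setU1 in_setD1 BP andbT; apply/orP; right; apply/eqP.
- apply/trivIsetP => A B; move=> /setU1P [->|/setD1P[nA AP]] /setU1P [->|/setD1P[nB BP]].
  + by rewrite eqxx.
  + move=> _; apply: disjP' => u; move=> /setU1P [-> | uB0] uB.
      by move: aD; rewrite (subsetP (sub _ BP)).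
    case: hB => [B0P|B00]; last by rewrite B00 inE in uB0.
    by move: (tP _ _ B0P BP); rewrite eq_sym nB => /(_ isT) /disjointFr /(_ uB0); rewrite uB.
  + move=> _; rewrite disjoint_sym; apply: disjP' => u; move=> /setU1P [-> | uB0] uB.
      by move: aD; rewrite (subsetP (sub _ AP)).
    case: hB => [B0P|B00]; last by rewrite B00 inE in uB0.
    by move: (tP _ _ B0P AP); rewrite eq_sym nA => /(_ isT) /disjointFr /(_ uB0); rewrite uB.
  + by apply: tP.
- rewrite !inE negb_or; apply/andP; split.
    by apply/negP => /eqP /setP /(_ a); rewrite !inE eqxx.
  by rewrite (negbTE nP) andbF.
Qed.

Lemma arith1 (b : bool) m n k : 2 <= k -> m <= b + n + k.-1 - 1 -> 1 + m <= 1 + n + k - 1.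
Proof. case: k => [|k] //= k2; case: b => /=; lia. Qed.

Lemma arith2 m n k : 2 <= k -> 1 + m <= n -> m <= n - 1.
Proof. lia. Qed.

Theorem lemma4p5 (T : finType) (V : {set T}) (adj : rel T) (x y : T) (k : nat) :
  simple_rel adj ->
  forest V adj ->
  2 <= mat V adj ->
  distant_leaf V adj x y ->
  2 <= k -> k <= mat V adj ->
  aim (V :\: [set x; y]) adj k.-1 + 1 <= aim V adj k.
Proof.
move=> sadj fV _ [xV yV Nx Sy] k2 _.
have [sym irr] := sadj.
have xya : adj x y.
  have : y \in [set u in V | adj x u] by rewrite Nx inE.
  by rewrite inE => /andP [].
have xny : x != y by apply/eqP => e; move: xya; rewrite e irr.
set W := V :\: [set x; y].
set a := [set x; y].
have key : forall M', admissable_matching W adj k.-1 M' ->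
    admissable_matching V adj k (a |: M') /\ a \notin M'.
  move=> M' [mM' [P' [pP' gP' aP' fP']]].
  move: (mM') => /andP [/forall_inP eM' /forall_inP dM'].
  have subW : forall f, f \in M' -> f \subset W by move=> f /eM' /edge_sub.
  have aW : forall f u, f \in M' -> u \in f -> u \in a -> False.
    move=> f u fM uf; move: (subsetP (subW _ fM) _ uf).
    by rewrite /W /a inE => /andP [/negP].
  have aM : a \notin M'.
    by apply/negP => aM; apply: (aW _ x aM); rewrite !inE eqxx.
  split => //.
  move: (pP') => /and3P [/eqP cP' /trivIsetP tP' nP'].
  have inM : forall B g, B \in P' -> g \in B -> g \in M'.
    by move=> B g BP gB; rewrite -cP'; apply/bigcupP; exists B.
  set B0 := odflt set0 [pick B in P' | [exists g in B, exists v in g, adj y v]].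
  have hB0 : B0 \in P' \/ B0 = set0.
    by rewrite /B0; case: pickP => [B /andP [BP _]|_]; [left|right].
  have inS : forall g v, g \in M' -> v \in g -> adj y v ->
      v \in [set u in V | adj y u & 1 < degree V adj u].
    move=> g v gM vg yv; have [vW [w wW vw]] := edge_other sadj (eM' g gM) vg.
    move: vW wW => /setDP [vV _] /setDP [wV wxy].
    rewrite inE vV yv /=; rewrite /degree.
    have yw : y != w by apply/eqP => e; move: wxy; rewrite -e !inE eqxx orbT.
    apply: (@leq_trans #|[set y; w]|); first by rewrite cards2 yw.
    apply: subset_leq_card; apply/subsetP => u; rewrite !inE => /orP [] /eqP ->.
      by rewrite yV sym.
    by rewrite wV.
  have uniqB : forall Bj g v, Bj \in P' -> g \in Bj -> v \in g -> adj y v -> B0 = Bj.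
    move=> Bj g v BjP gBj vg yv; rewrite /B0; case: pickP => [B1 | none]; last first.
      have := none Bj; rewrite /= BjP /= => /negbT /negP h; exfalso; apply: h.
      by apply/exists_inP; exists g => //; apply/exists_inP; exists v.
    case/andP => [B1P /exists_inP [g1 g1B1 /exists_inP [v1 v1g1 yv1]]] /=.
    have gM := inM _ _ BjP gBj; have g1M := inM _ _ B1P g1B1.
    have e1 : v1 = v.
      move/card_le1_eqP: Sy => H.
      by apply: (H v v1); [exact: inS _ _ gM vg yv | exact: inS _ _ g1M v1g1 yv1].
    subst v1.
    have e2 : g1 = g.
      apply/eqP; apply/negP => /negP ne.
      move: (dM' g1 g1M) => /forall_inP /(_ g gM) /implyP /(_ ne) /disjointFr /(_ v1g1).
      by rewrite vg.
    subst g1.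
    apply/eqP; apply/negP => /negP ne.
    by move: (tP' _ _ B1P BjP ne) => /disjointFr /(_ g1B1); rewrite gBj.
  have newold : forall Bj f g, Bj \in P' -> Bj != B0 -> f \in a |: B0 -> g \in Bj -> gap adj f g.
    move=> Bj f g BjP nBj; move=> /setU1P [-> | fB0] gBj.
      have gM := inM _ _ BjP gBj.
      apply/andP; split.
        by apply: disjP' => u ua ug; apply: (aW _ _ gM ug ua).
      apply/forall_inP => u; rewrite !inE => /orP [] /eqP ->; apply/forall_inP => v vg;
        apply/negP => h.
        have vV : v \in V by move: (subsetP (subW _ gM) _ vg); rewrite inE => /andP [].
        have : v \in [set u in V | adj x u] by rewrite inE vV h.
        rewrite Nx inE => /eqP e; subst v.
        by apply: (aW _ _ gM vg); rewrite !inE eqxx orbT.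
      by move: nBj; rewrite (uniqB _ _ _ BjP gBj vg h) eqxx.
    case: hB0 => [B0P|B00]; last by rewrite B00 inE in fB0.
    by apply: (gP' B0 Bj) => //; rewrite eq_sym.
  have pP := part_add pP' aM hB0.
  have subP : forall B, B \in P' -> B \subset M' by move=> B BP; rewrite -cP'; apply: bigcup_sup.
  split.
    apply/andP; split.
      apply/forall_inP => f; move=> /setU1P [-> | fM].
        apply/exists_inP; exists x => //; apply/exists_inP; exists y => //.
        by rewrite xya eqxx.
      exact: edge_mono (subsetDl V _) (eM' f fM).
    apply/forall_inP => f; move=> /setU1P [-> | fM];
      apply/forall_inP => g; move=> /setU1P [-> | gM]; apply/implyP => nfg.
    - by rewrite eqxx in nfg.
    - by apply: disjP' => u ua ug; apply: (aW _ _ gM ug ua).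
    - by apply: disjP' => u uf ua; apply: (aW _ _ fM uf ua).
    - by move: (dM' f fM) => /forall_inP /(_ g gM) /implyP; apply.
  exists ((a |: B0) |: (P' :\ B0)); split => //.
  - move=> Bi Bj; move=> /setU1P [->|/setD1P[nBi BiP]] /setU1P [->|/setD1P[nBj BjP]] ne f g.
    + by rewrite eqxx in ne.
    + by move=> fB gB; apply: newold gB.
    + by move=> fB gB; apply: gap_sym => //; apply: newold fB.
    + by apply: gP'.
  - rewrite (adm_seqE _ pP) cardsU1 aM; rewrite (adm_seqE _ pP') in aP'.
    rewrite cardsU1.
    have -> : (a |: B0) \notin P' :\ B0.
      apply/negP; rewrite inE => /andP [_ h]; move: (subsetP (subP _ h) a).
      by rewrite !inE eqxx /= => /(_ isT); apply/negP.
    have e1 := cardsD1 B0 P'.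
    move: aP'; rewrite e1 /=.
    by apply: arith1.
  - move=> B BP; apply: forest_sub fV.
    apply/subsetP => u /bigcupP [f fB uf].
    have : f \in a |: M' by move: pP => /and3P [/eqP <- _ _]; apply/bigcupP; exists B.
    move=> /setU1P [e | fM].
      by move: uf; rewrite e !inE => /orP [] /eqP ->.
    by move: (subsetP (subW _ fM) _ uf) => /setDP [].
have adm0 : admissable_matching W adj k.-1 set0.
  split.
    by apply/andP; split; apply/forall_inP => f; rewrite inE.
  exists set0; split.
  - apply/and3P; split.
    + by apply/eqP/setP => u; rewrite inE; apply/bigcupP => [[B]]; rewrite inE.
    + by apply/trivIsetP => A B; rewrite inE.
    + by rewrite inE.
  - by move=> Mi Mj; rewrite inE.
  - by rewrite /admissable_seq enum_set0 /=; lia.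
  - by move=> Mi; rewrite inE.
have [h1 h2] := key _ adm0.
have ge1 : 1 <= aim V adj k by move: (aim_ge h1); rewrite cardsU1 h2 cards0.
suff : aim W adj k.-1 <= aim V adj k - 1 by lia.
apply: aim_le => M hM.
have [h3 h4] := key _ hM.
move: (aim_ge h3); rewrite cardsU1 h4 /=; lia.
Qed.
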